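(* Let $a_1,a_2,\dots$ be complex numbers, and let $r,k\geq0$ and $n$ be integers. Then $\mathcal{A}_{n,k}(a_{r+1},a_{r+2},\dots)$ equals \[ \sum_{j_1+j_2+\cdots+j_{r+1}=k}\binom{k}{j_1,j_2,\dots,j_{r+1}}(-a_1)^{j_1}(-a_2)^{j_2}\cdots(-a_r)^{j_r}\,\mathcal{A}_{n+J+rj_{r+1},\,j_{r+1}}(a_1,a_2,\dots), \] where $J=(r-1)j_1+(r-2)j_2+\cdots+1\cdot j_{r-1}$ and the sum is over all $j_1,\dots,j_{r+1}\in\mathbb{Z}_{\geq0}$ with sum $k$.
   Context: For integers $n$ and $k\geq0$ and a sequence $b_1,b_2,\dots$, the De Moivre polynomial $\mathcal{A}_{n,k}(b_1,b_2,\dots)$ is the coefficient of $x^n$ in $(b_1x+b_2x^2+b_3x^3+\cdots)^k$ (so $\mathcal{A}_{0,0}=1$ and $\mathcal{A}_{n,k}=0$ for $n<k$). $\binom{k}{j_1,\dots,j_{r+1}}$ is the multinomial coefficient. *)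

(* Defs.v *)
From mathcomp Require Import all_boot all_algebra.
From mathcomp Require Import complex.
From mathcomp Require Import Rstruct.
From Stdlib Require Import Reals.

Set Implicit Arguments.
Unset Strict Implicit.
Unset Printing Implicit Defensive.

Import GRing.Theory Num.Theory.
Local Open Scope ring_scope.

Definition CC : Type := complex Rdefinitions.R.

(* De Moivre polynomial A_{n,k}(b_1, b_2, ...): the coefficient of x^n in
   (b_1 x + b_2 x^2 + ...)^k.  The sequence is b : nat -> R with b_i = b i
   for i >= 1 (the value b 0 is never used).  For n >= 0 only the terms
   b_1 x, ..., b_n x^n can contribute to the coefficient of x^n, so the
   power series is truncated to the polynomial \sum_{1<=i<=n} b_i x^i. *)
Definition deMoivre (R : comNzRingType) (b : nat -> R) (n : int) (k : nat) : R :=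
  match n with
  | Posz m => ((\sum_(1 <= i < m.+1) b i *: 'X^i : {poly R}) ^+ k)`_m
  | Negz _ => 0
  end.

Definition multinom (m k : nat) (j : 'I_m -> nat) : nat :=
  divn (factorial k) (\prod_(i < m) factorial (j i))%N.

(* Main.v *)
Require Import Defs.
From mathcomp Require Import all_boot all_algebra.
From mathcomp Require Import complex.
From mathcomp Require Import Rstruct.
From mathcomp Require Import zify ring.
Import GRing.Theory Num.Theory.
Local Open Scope ring_scope.
Set Implicit Arguments. Unset Strict Implicit. Unset Printing Implicit Defensive.

Lemma fact_prod_dvd m (j : 'I_m -> nat) :
  (\prod_(i < m) (j i)`! %| (\sum_(i < m) j i)`!)%N.
Proof.
elim: m j => [|m IH] j; first by rewrite big_ord0 dvd1n.
rewrite !big_ord_recl.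
have H := IH (fun i => j (lift ord0 i)).
set s := (\sum_(i < m) j (lift ord0 i))%N in H *.
rewrite -(bin_fact (leq_addr s (j ord0))) addKn.
by rewrite dvdn_mull // dvdn_mul.
Qed.

Lemma multinom_split m (j : 'I_m.+1 -> nat) :
  multinom (j ord0 + \sum_(i < m) j (lift ord0 i)) j =
  ('C(j ord0 + \sum_(i < m) j (lift ord0 i), j ord0) *
   multinom (\sum_(i < m) j (lift ord0 i)) (fun i => j (lift ord0 i)))%N.
Proof.
rewrite /multinom big_ord_recl.
have H := fact_prod_dvd (fun i => j (lift ord0 i)).
set s := (\sum_(i < m) j (lift ord0 i))%N in H *.
set pr := (\prod_(i < m) (j (lift ord0 i))`!)%N in H *.
rewrite -(bin_fact (leq_addr s (j ord0))) addKn.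
rewrite -{1}(divnK H).
have Pp : (0 < pr)%N by rewrite prodn_gt0 // => i; rewrite fact_gt0.
rewrite [X in (X %/ _)%N](_ : _ = ('C(j ord0 + s, j ord0) * (s`! %/ pr)) * ((j ord0)`! * pr))%N; last by ring.
by rewrite mulnK // muln_gt0 fact_gt0.
Qed.

Lemma eq_multinom m k (j1 j2 : 'I_m -> nat) : j1 =1 j2 -> multinom k j1 = multinom k j2.
Proof. by move=> e; rewrite /multinom; under eq_bigr do rewrite e. Qed.

Section Multi.
Variable R : comNzRingType.

Definition hsplit m K (p : 'I_K * {ffun 'I_m -> 'I_K}) : {ffun 'I_m.+1 -> 'I_K} :=
  [ffun i => if unlift ord0 i is Some i' then p.2 i' else p.1].

Lemma multinomialE m K k (x : 'I_m -> R) : (k < K)%N ->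
  (\sum_(i < m) x i) ^+ k =
  \sum_(j : {ffun 'I_m -> 'I_K} | (\sum_(i < m) (j i : nat))%N == k)
     (multinom k (fun i => nat_of_ord (j i)))%:R * \prod_(i < m) x i ^+ j i.
Proof.
elim: m k x => [|m IH] k x kK.
  rewrite big_ord0 expr0n.
  case: k kK => [|k] kK /=.
    rewrite (big_pred1 [ffun i => Ordinal kK]); last first.
      move=> j /=; rewrite big_ord0 eqxx; symmetry; apply/eqP/ffunP => -[] //.
    by rewrite big_ord0 /multinom big_ord0 mulr1.
  rewrite big_pred0 // => j; by rewrite big_ord0.
rewrite big_ord_recl addrC exprDn.
rewrite (reindex (@hsplit m K)); last first.
  exists (fun j : {ffun 'I_m.+1 -> 'I_K} => (j ord0, [ffun i : 'I_m => j (lift ord0 i)])) => [p _|j _].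
    case: p => l j'; rewrite /hsplit /= ffunE unlift_none; congr pair.
    by apply/ffunP => i; rewrite !ffunE liftK.
  apply/ffunP => i; rewrite /hsplit !ffunE /=.
  by case: unliftP => [i' ->|->]; rewrite ?ffunE.
set G := fun l : nat => \sum_(j' : {ffun 'I_m -> 'I_K})
   (if (l + \sum_(i < m) (j' i : nat) == k)%N then
      ('C(k, l) * multinom (k - l) (fun i => nat_of_ord (j' i)))%:R *
      (x ord0 ^+ l * \prod_(i < m) x (lift ord0 i) ^+ j' i) else 0).
symmetry; transitivity (\sum_(l : 'I_K) G l).
  rewrite pair_bigA /= big_mkcond /=; apply: eq_bigr => -[l j'] _ /=.
  have H0 : hsplit (l, j') ord0 = l by rewrite /hsplit ffunE unlift_none.
  have H1 : forall i, hsplit (l, j') (lift ord0 i) = j' i.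
    by move=> i; rewrite /hsplit ffunE liftK.
  have HM := multinom_split (fun i => nat_of_ord (hsplit (l, j') i)).
  rewrite /= H0 in HM.
  rewrite (eq_bigr (fun i => nat_of_ord (j' i)) (fun i _ => congr1 (@nat_of_ord K) (H1 i))) in HM.
  rewrite (eq_multinom _ (j2 := fun i => nat_of_ord (j' i))) in HM; last by move=> i /=; rewrite H1.
  rewrite !big_ord_recl H0.
  rewrite (eq_bigr (fun i => nat_of_ord (j' i)) (fun i _ => congr1 (@nat_of_ord K) (H1 i))).
  rewrite (eq_bigr (fun i => x (lift ord0 i) ^+ j' i)); last by move=> i _; rewrite H1.
  case: eqP => // Hk.
  rewrite -Hk HM addKn natrM; congr (_ * (_ * _)).

rewrite (bigID (fun l : 'I_K => (l < k.+1)%N)) /=.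
rewrite [X in _ + X]big1 ?addr0; last first.
  move=> l; rewrite -leqNgt => Hl; apply: big1 => j' _.
  by case: eqP => // Hk; move: Hl; rewrite -Hk; lia.
rewrite -(big_ord_widen _ G kK); apply: eq_bigr => l _.
have lk : (l <= k)%N by rewrite -ltnS.
rewrite (IH (k - l)%N); last by apply: leq_ltn_trans kK; rewrite leq_subr.
rewrite big_mkcond /= big_distrl /= -sumrMnl /G; apply: eq_bigr => j' _.
have -> : ((l + \sum_(i < m) (j' i : nat))%N == k) = ((\sum_(i < m) (j' i : nat))%N == (k - l)%N).
  by apply/eqP/eqP; lia.
case: eqP => _; last by rewrite mul0r mul0rn.
move: ('C(k, l)) (multinom _ _) (x ord0 ^+ l) (\prod_(i < m) _) => c M a P.
rewrite natrM -mulr_natr; ring.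
Qed.
End Multi.

Section Trunc.
Variable R : comNzRingType.

Definition T (b : nat -> R) (N : nat) : {poly R} := \sum_(1 <= i < N) b i *: 'X^i.

Lemma powXsplit (A Rr : {poly R}) d k :
  exists S, (A + 'X^d * Rr) ^+ k = A ^+ k + 'X^d * S.
Proof.
elim: k => [|k [S HS]]; first by exists 0; rewrite !expr0 mulr0 addr0.
exists (Rr * (A ^+ k + 'X^d * S) + A * S).
by rewrite exprS HS exprS; ring.
Qed.

Lemma trunc_coef (b : nat -> R) N m k : (m < N)%N ->
  ((T b N) ^+ k)`_m = ((T b m.+1) ^+ k)`_m.
Proof.
move=> mN.
have [Rr ->] : exists Rr, T b N = T b m.+1 + 'X^(m.+1) * Rr.
  exists (\sum_(m.+1 <= i < N) b i *: 'X^(i - m.+1)).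
  rewrite /T (@big_cat_nat _ _ _ m.+1) //=; congr (_ + _).
  rewrite big_distrr /=; apply: eq_big_nat => i /andP[hi _].
  by rewrite -scalerAr -exprD subnKC.
have [S ->] := powXsplit (T b m.+1) Rr m.+1 k.
by rewrite coefD coefXnM ltnSn addr0.
Qed.

Lemma deM_neg (b : nat -> R) (z : int) k : z < 0 -> deMoivre b z k = 0.
Proof. by case: z. Qed.

Lemma deM_shift (b : nat -> R) (z : int) (t E N kk : nat) :
  z = t%:Z - E%:Z -> (t - E < N)%N ->
  deMoivre b z kk = if (t < E)%N then 0 else ((T b N) ^+ kk)`_(t - E).
Proof.
move=> -> tN; case: ltnP => tE.
  by apply: deM_neg; rewrite subr_lt0 ltz_nat.
have -> : t%:Z - E%:Z = (t - E)%N%:Z by rewrite subzn.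
by rewrite /deMoivre trunc_coef.
Qed.
End Trunc.

Lemma ord_max_neq r (i : 'I_r.+1) : (i != ord_max) = (i < r)%N.
Proof. by rewrite -(inj_eq val_inj) /= ltn_neqAle -ltnS ltn_ord andbT. Qed.

Lemma natid r (j : 'I_r.+1 -> nat) :
  (r * \sum_(i < r.+1) j i =
   \sum_(i < r.+1 | (i < r)%N) (r.-1 - i) * j i + r * j ord_max
   + \sum_(i < r.+1 | (i < r)%N) i.+1 * j i)%N.
Proof.
rewrite (bigD1 ord_max) //= mulnDr big_distrr /=.
rewrite (eq_bigl (fun i : 'I_r.+1 => (i < r)%N)); last by move=> i; rewrite ord_max_neq.
have H : (\sum_(i < r.+1 | (i < r)%N) (r.-1 - i) * j i + \sum_(i < r.+1 | (i < r)%N) i.+1 * j i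
   = \sum_(i < r.+1 | (i < r)%N) r * j i)%N.
  rewrite -big_split /=; apply: eq_bigr => i ir; rewrite -mulnDl; congr (_ * _)%N; lia.
rewrite -H; set A := (\sum_(i < r.+1 | _) (r.-1 - i) * j i)%N; set B := (\sum_(i < r.+1 | _) i.+1 * j i)%N.
lia.
Qed.

Section Main.
Variable R : comNzRingType.

Lemma poly_id (a : nat -> R) r k N : (0 < N)%N ->
  'X^(r * k) * (T (fun i => a (i + r)%N) N) ^+ k =
  (\sum_(i < r.+1) (if (i < r)%N then (- a i.+1)%:P * 'X^(i.+1) else T a (N + r))) ^+ k.
Proof.
move=> N0; rewrite exprM -exprMn; congr (_ ^+ _).
rewrite big_ord_recr /= ltnn.
rewrite (eq_bigr (fun i : 'I_r => (- a i.+1)%:P * 'X^(i.+1))); last by move=> i _; rewrite /= ltn_ord.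
rewrite {2}/T (@big_cat_nat _ _ _ r.+1) //=; last by lia.
rewrite big_add1 /= big_mkord addrA.
rewrite -big_split /= big1 ?add0r; last first.
  by move=> i _; rewrite polyCN mulNr mul_polyC addNr.
rewrite -(add1n r) big_addn addnK /T big_distrr /=.
apply: eq_big_nat => i _.
by rewrite -scalerAr -exprD addnC.
Qed.
End Main.
Unset Implicit Arguments.

Theorem proposition7p2 (a : nat -> CC) (r k : nat) (n : int) :
  deMoivre (fun i => a (i + r)%N) n k =
  \sum_(j : {ffun 'I_r.+1 -> 'I_k.+1} | (\sum_(i < r.+1) (j i : nat))%N == k)
    (multinom k (fun i => nat_of_ord (j i)))%:R
    * (\prod_(i < r.+1 | (i < r)%N) (- a i.+1) ^+ j i)
    * deMoivre a
        (n + ((\sum_(i < r.+1 | (i < r)%N) (r.-1 - i) * j i)%N)%:Z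
           + (r * j ord_max)%N%:Z)
        (j ord_max).
Proof.
have Hid : forall j : {ffun 'I_r.+1 -> 'I_k.+1}, (\sum_(i < r.+1) (j i : nat))%N = k ->
   (r * k = \sum_(i < r.+1 | (i < r)%N) (r.-1 - i) * j i + r * j ord_max
   + \sum_(i < r.+1 | (i < r)%N) i.+1 * j i)%N.
  move=> j Hs; have := natid (fun i => nat_of_ord (j i)); rewrite Hs; exact.
case: (boolP (n + (r * k)%N%:Z < 0)) => hneg.
  rewrite deM_neg; last by lia.
  symmetry; apply: big1 => j /eqP /Hid Hj.
  rewrite deM_neg ?mulr0 //; lia.
have [t Ht] : exists t : nat, n + (r * k)%N%:Z = t%:Z.
  by case: (n + (r * k)%N%:Z) hneg => // t _; exists t.
set N := t.+1.
rewrite (@deM_shift _ _ n t (r * k) N); last by lia. 2: lia.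
rewrite -coefXnM poly_id //.
rewrite (@multinomialE _ _ k.+1 k _ (ltnSn k)) coef_sum.
apply: eq_bigr => j /eqP Hs.
have Hj := Hid j Hs.
have Hc : forall (p : {poly CC}) (m : nat) i, ((m%:R * p)`_i) = m%:R * p`_i.
  by move=> p m i; rewrite mulr_natl coefMn mulr_natl.
rewrite Hc -[RHS]mulrA; congr (_ * _).
rewrite (bigD1 ord_max) //= ltnn.
rewrite (eq_bigl (fun i : 'I_r.+1 => (i < r)%N)); last by move=> i; rewrite ord_max_neq.
rewrite (eq_bigr (fun i : 'I_r.+1 => (- a i.+1)%:P ^+ j i * 'X^(i.+1 * j i))); last first.
  by move=> i ->; rewrite exprMn exprM.
rewrite big_split /= prodrXr.
rewrite (eq_bigr (fun i : 'I_r.+1 => ((- a i.+1) ^+ j i)%:P)); last by move=> i _; rewrite rmorphXn.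
rewrite -rmorph_prod mulrCA coefCM; congr (_ * _).
rewrite mulrC coefXnM.
rewrite (@deM_shift _ _ _ t (\sum_(i < r.+1 | (i < r)%N) i.+1 * j i) (N + r)) //. 2: lia.
move: Hj Ht; set A := (\sum_(i < r.+1 | _) (r.-1 - i) * j i)%N; set B := (\sum_(i < r.+1 | _) i.+1 * j i)%N.
lia.
Qed.
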